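(* Let $\mathfrak{D}$ be a diagram, $\mathfrak{T}$ a spanning tree for it of depth $d$. Then $L^{\mathfrak{D}}=\mathrm{Log}(\{\mathfrak{F}\mid\mathfrak{F}\models\forall x_0\,\mathsf{e}^{\mathfrak{D}}(x_0)\})=\mathsf{K}+\{\gamma^{\mathfrak{D}}_m\mid m\in\omega\}$.
   Context: Fix an index set $\Lambda$; Kripke frames $(W,(R_\lambda)_{\lambda\in\Lambda})$, modal operators $\Diamond_\lambda,\Box_\lambda$. A diagram is a finite pointed rooted Kripke frame $\mathfrak{D}=(\{x_0,\dots,x_n\},(R^{\mathfrak{D}}_\lambda),x_0)$ (every point reachable from $x_0$ by a directed path); $\mathsf{e}^{\mathfrak{D}}(x_0)=\exists x_1\dots\exists x_n\bigwedge\{x_iR_\lambda x_j\mid x_iR^{\mathfrak{D}}_\lambda x_j\}$. $\mathrm{Log}(\mathcal{C})$ is the set of modal formulas valid on all frames in $\mathcal{C}$, and $\mathsf{K}+\Sigma$ the least normal modal logic containing $\Sigma$. A spanning tree $\mathfrak{T}$ for $\mathfrak{D}$ is a subframe on the same points with $R^{\mathfrak{T}}_\lambda\subseteq R^{\mathfrak{D}}_\lambda$, no edges into $x_0$, and a unique directed path from $x_0$ to each other point; its depth $d$ is the maximal length of such paths. With nominals $j_0,\dots,j_n$: $\chi_i=j_i\wedge\bigwedge_{x_iR^{\mathfrak{D}}_\lambda x_k}\Diamond_\lambda j_k$, $\eta_i=\chi_i\wedge\bigwedge_{x_iR^{\mathfrak{T}}_\lambda x_k}\Diamond_\lambda\eta_k$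 (recursively from leaves), $\eta^{\mathfrak{D}}=\eta_0$; for a finite set $\Psi$ of modal formulas, $\gamma^{\mathfrak{D}}_\Psi=\bigvee_{\kappa:\{0,\dots,n\}\to\Psi}\eta^{\mathfrak{D}}(\kappa(0),\dots,\kappa(n))$, where $\eta^{\mathfrak{D}}(\phi_0,\dots,\phi_n)$ substitutes $\phi_l$ for $j_l$. Finally $\gamma^{\mathfrak{D}}_m=\Box^{\le d}(p_1\vee\dots\vee p_m)\to\gamma^{\mathfrak{D}}_{\{p_1,\dots,p_m\}}$, where $\Box^{\le d}\phi$ is the conjunction of all $\Box_{\lambda_1}\cdots\Box_{\lambda_k}\phi$ with $k\le d$ and $\lambda_i$ ranging over the indices occurring in $\mathfrak{D}$. *)

(* Defs.v *)
From Stdlib Require Import List Arith.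
Import ListNotations.
Set Implicit Arguments.

Inductive form (L : Type) : Type :=
| Var : nat -> form L
| Bot : form L
| Imp : form L -> form L -> form L
| Box : L -> form L -> form L.
Arguments Var {L} _.
Arguments Bot {L}.

Definition Neg {L} (a : form L) := Imp a Bot.
Definition Top {L} : form L := Neg Bot.
Definition Or {L} (a b : form L) := Imp (Neg a) b.
Definition And {L} (a b : form L) := Neg (Imp a (Neg b)).
Definition Dia {L} (l : L) (a : form L) := Neg (Box l (Neg a)).
Definition bigAnd {L} (s : list (form L)) := fold_right And Top s.
Definition bigOr {L} (s : list (form L)) := fold_right Or Bot s.

Record frame (L : Type) := Frame { W : Type; R : L -> W -> W -> Prop }.

Fixpoint sat {L} (F : frame L) (V : nat -> W F -> Prop) (w : W F) (a : form L) : Prop :=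
  match a with
  | Var p => V p w
  | Bot => False
  | Imp a b => sat F V w a -> sat F V w b
  | Box l a => forall v, R F l w v -> sat F V v a
  end.

Definition valid {L} (F : frame L) (a : form L) : Prop :=
  forall V w, sat F V w a.

Definition Log {L} (C : frame L -> Prop) (a : form L) : Prop :=
  forall F, C F -> valid F a.

(* classical tautologies: valid under every boolean valuation treating
   variables and boxed formulas as atoms *)
Fixpoint peval {L} (v : form L -> bool) (a : form L) : bool :=
  match a with
  | Var _ => v a
  | Bot => false
  | Imp a b => implb (peval v a) (peval v b)
  | Box _ _ => v a
  end.
Definition tautology {L} (a : form L) : Prop := forall v, peval v a = true.

Fixpoint subst {L} (s : nat -> form L) (a : form L) : form L :=
  match a with
  | Var p => s p
  | Bot => Bot
  | Imp a b => Imp (subst s a) (subst s b)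
  | Box l a => Box l (subst s a)
  end.

Inductive KPlus {L} (Sigma : form L -> Prop) : form L -> Prop :=
| KP_taut a : tautology a -> KPlus Sigma a
| KP_K l a b : KPlus Sigma (Imp (Box l (Imp a b)) (Imp (Box l a) (Box l b)))
| KP_ax a : Sigma a -> KPlus Sigma a
| KP_MP a b : KPlus Sigma (Imp a b) -> KPlus Sigma a -> KPlus Sigma b
| KP_Nec l a : KPlus Sigma a -> KPlus Sigma (Box l a)
| KP_US s a : KPlus Sigma a -> KPlus Sigma (subst s a).

(* A diagram on points {0,...,n} (root x_0 = 0) given by its finite list of
   labelled edges (i, l, k) meaning x_i R_l x_k. *)
Record diagram (L : Type) := Diagram { dsize : nat; dedges : list (nat * L * nat) }.

Inductive dpath {L} (E : list (nat * L * nat)) : nat -> list (L * nat) -> nat -> Prop :=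
| dpath_nil x : dpath E x [] x
| dpath_cons x l y p z : In (x, l, y) E -> dpath E y p z -> dpath E x ((l, y) :: p) z.

Definition wf_diagram {L} (D : diagram L) : Prop :=
  forall i l k, In (i, l, k) (dedges D) -> i <= dsize D /\ k <= dsize D.

Definition rooted {L} (D : diagram L) : Prop :=
  forall i, i <= dsize D -> exists p, dpath (dedges D) 0 p i.

Definition spanning_tree {L} (D : diagram L) (T : list (nat * L * nat)) : Prop :=
  (forall e, In e T -> In e (dedges D)) /\
  (forall i l, ~ In (i, l, 0) T) /\
  (forall i, 1 <= i <= dsize D ->
     exists p, dpath T 0 p i /\ forall q, dpath T 0 q i -> q = p).

Definition tree_depth {L} (D : diagram L) (T : list (nat * L * nat)) (d : nat) : Prop :=
  (forall i p, i <= dsize D -> dpath T 0 p i -> length p <= d) /\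
  (exists i p, i <= dsize D /\ dpath T 0 p i /\ length p = d).

Definition frame_cond {L} (D : diagram L) (F : frame L) : Prop :=
  forall x0 : W F, exists f : nat -> W F,
    f 0 = x0 /\ forall i l k, In (i, l, k) (dedges D) -> R F l (f i) (f k).

(* chi_i and eta_i with the nominals j_0..j_n replaced by j 0, ..., j n *)
Definition chi {L} (D : diagram L) (j : nat -> form L) (i : nat) : form L :=
  And (j i) (bigAnd (flat_map (fun '(x, l, k) =>
                        if Nat.eqb x i then [Dia l (j k)] else []) (dedges D))).

(* recursion from the leaves; the fuel (dsize D + 1) exceeds the depth *)
Fixpoint eta_aux {L} (D : diagram L) (T : list (nat * L * nat)) (j : nat -> form L)
    (fuel : nat) (i : nat) : form L :=
  match fuel with
  | 0 => chi D j i
  | S f => And (chi D j i) (bigAnd (flat_map (fun '(x, l, k) =>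
                   if Nat.eqb x i then [Dia l (eta_aux D T j f k)] else []) T))
  end.

Definition eta {L} (D : diagram L) (T : list (nat * L * nat)) (j : nat -> form L) : form L :=
  eta_aux D T j (S (dsize D)) 0.

Fixpoint words {A} (k : nat) (s : list A) : list (list A) :=
  match k with
  | 0 => [[]]
  | S k' => flat_map (fun a => map (cons a) (words k' s)) s
  end.

(* gamma^D_Psi : disjunction over all kappa : {0..n} -> Psi *)
Definition gammaPsi {L} (D : diagram L) (T : list (nat * L * nat)) (Psi : list (form L)) : form L :=
  bigOr (map (fun w => eta D T (fun i => nth i w Bot)) (words (S (dsize D)) Psi)).

Definition indices {L} (D : diagram L) : list L := map (fun '(_, l, _) => l) (dedges D).

Definition boxes {L} (ls : list L) (a : form L) : form L := fold_right (@Box L) a ls.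
Definition box_upto {L} (D : diagram L) (d : nat) (a : form L) : form L :=
  bigAnd (flat_map (fun k => map (fun ls => boxes ls a) (words k (indices D))) (seq 0 (S d))).

Definition ps {L} (m : nat) : list (form L) := map Var (seq 1 m).

Definition gamma_m {L} (D : diagram L) (T : list (nat * L * nat)) (d m : nat) : form L :=
  Imp (box_upto D d (bigOr (ps m))) (gammaPsi D T (ps m)).

(* Main.v *)
Require Import Defs.
From Stdlib Require Import List Arith.
From mathcomp Require boolp classical_sets.
Module ZornM.
Import boolp classical_sets.
Lemma zorn_ext {T : Type} (P : (T -> Prop) -> Prop) (A0 : T -> Prop) :
  P A0 ->
  (forall F : (T -> Prop) -> Prop, (exists X, F X) -> (forall X, F X -> P X) ->
     (forall X Y, F X -> F Y -> (forall t, X t -> Y t) \/ (forall t, Y t -> X t)) ->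
     P (fun t => exists X, F X /\ X t)) ->
  exists M, (forall t, A0 t -> M t) /\ P M /\ (forall t, P (fun u => M u \/ u = t) -> M t).
Proof.
intros H0 Hch.
assert (Pext : forall X Y, (forall t, X t <-> Y t) -> P X -> P Y).
{ intros X Y HXY HX. replace Y with X; [exact HX|].
  apply boolp.funext; intro t; apply boolp.propext; apply HXY. }
destruct (@Zorn_bigcup T (fun B => P (fun t => A0 t \/ B t))) as [A [HA Hmax]].
- intros F HF Htot.
  destruct (boolp.pselect (exists X, F X)) as [[X FX]|NE].
  + eapply Pext; [|apply (Hch (fun Y => exists X, F X /\ Y = (fun t => A0 t \/ X t)))].
    * intro t; split.
      -- intros [Y [[X' [FX' ->]] [Ht|Ht]]]; [now left|right; exists X'; auto].
      -- intros [Ht|[X' FX' Ht]]. { exists (fun t => A0 t \/ X t); split; [exists X; auto| now left]. }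
         exists (fun t => A0 t \/ X' t); split; [exists X'; auto| now right].
    * exists (fun t => A0 t \/ X t); exists X; auto.
    * intros Y [X' [FX' ->]]; apply HF; exact FX'.
    * intros Y Z [X1 [F1 ->]] [X2 [F2 ->]].
      destruct (Htot X1 X2 F1 F2) as [S|S]; [left|right]; intros t [Ht|Ht]; auto.
  + eapply Pext; [|exact H0]. intro t; split; [now left|].
    intros [Ht|[X FX _]]; [exact Ht| exfalso; apply NE; exists X; exact FX].
- exists (fun t => A0 t \/ A t). split; [now left|split; [exact HA|]].
  intros t Ht. destruct (boolp.pselect (A t)) as [At|nAt]; [now right|].
  exfalso. apply (Hmax (fun u => A u \/ u = t)); unfold proper, subset.
  + split. { intros u Hu; now left. }
    intro S. apply nAt. exact (S t (or_intror eq_refl)).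
  + eapply Pext; [|exact Ht]. intro u; split.
    * intros [[H|H]|H]; auto.
    * intros [H|[H|H]]; auto.
Qed.
End ZornM.

From Stdlib Require Import List ListDec Arith Lia Classical ClassicalEpsilon FunctionalExtensionality PropExtensionality ProofIrrelevance.
Import ListNotations.

Ltac taut_tac :=
  let v := fresh "v" in
  intro v; simpl;
  repeat match goal with
  | |- context [peval v ?x] => destruct (peval v x)
  | |- context [forallb (peval v) ?x] => destruct (forallb (peval v) x)
  | |- context [v ?x] => destruct (v x)
  end; reflexivity.

Section Basics.
Context {L : Type} (Sig : form L -> Prop).
Notation Thm := (KPlus Sig).

Lemma peval_bigAnd (v : form L -> bool) s : peval v (bigAnd s) = forallb (peval v) s.
Proof. induction s; simpl; [reflexivity|]. rewrite IHs. destruct (peval v a), (forallb (peval v) s); reflexivity. Qed.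
Lemma peval_bigOr (v : form L -> bool) s : peval v (bigOr s) = existsb (peval v) s.
Proof. induction s; simpl; [reflexivity|]. rewrite IHs. destruct (peval v a), (existsb (peval v) s); reflexivity. Qed.

Fixpoint chain (xs : list (form L)) (y : form L) := match xs with [] => y | x::r => Imp x (chain r y) end.

Lemma thm_chain xs y : Thm (chain xs y) -> (forall x, In x xs -> Thm x) -> Thm y.
Proof.
  induction xs; simpl; intros H Hx; [exact H|].
  apply IHxs; [|auto]. eapply KP_MP; [exact H|]. apply Hx; auto.
Qed.

Lemma thm_taut xs y : (forall x, In x xs -> Thm x) -> tautology (chain xs y) -> Thm y.
Proof. intros H T; apply (thm_chain xs); [apply KP_taut; exact T|exact H]. Qed.

Lemma thm_mp a b : Thm (Imp a b) -> Thm a -> Thm b.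
Proof. intros; eapply KP_MP; eauto. Qed.

Lemma thm_trans a b c : Thm (Imp a b) -> Thm (Imp b c) -> Thm (Imp a c).
Proof. intros H1 H2. apply (thm_taut [Imp a b; Imp b c]); [simpl; intros x [<-|[<-|[]]]; auto|taut_tac]. Qed.

Lemma box_mono l a b : Thm (Imp a b) -> Thm (Imp (Box l a) (Box l b)).
Proof. intro H. eapply KP_MP; [apply KP_K|]. apply KP_Nec; exact H. Qed.

Lemma box_bigAnd l s : Thm (Imp (bigAnd (map (Box l) s)) (Box l (bigAnd s))).
Proof.
  induction s as [|x s IH]; simpl.
  - apply (thm_taut [Box l Top]). { simpl; intros y [<-|[]]. apply KP_Nec, KP_taut. taut_tac. } taut_tac.
  - assert (H1 : Thm (Imp (Box l x) (Imp (Box l (bigAnd s)) (Box l (And x (bigAnd s)))))).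
    { eapply thm_trans; [apply box_mono with (a := x) (b := Imp (bigAnd s) (And x (bigAnd s)))|].
      - apply KP_taut; taut_tac.
      - apply KP_K. }
    apply (thm_taut [Imp (bigAnd (map (Box l) s)) (Box l (bigAnd s));
       Imp (Box l x) (Imp (Box l (bigAnd s)) (Box l (And x (bigAnd s))))]).
    { simpl; intros y [<-|[<-|[]]]; auto. }
    taut_tac.
Qed.

Lemma thm_in2 (a b : form L) : Thm a -> Thm b -> forall x, In x [a;b] -> Thm x.
Proof. intros Ha Hb x [<-|[<-|[]]]; auto. Qed.
Lemma thm_in1 (a : form L) : Thm a -> forall x, In x [a] -> Thm x.
Proof. intros Ha x [<-|[]]; auto. Qed.
Lemma thm_in3 (a b c : form L) : Thm a -> Thm b -> Thm c -> forall x, In x [a;b;c] -> Thm x.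
Proof. intros Ha Hb Hc x [<-|[<-|[<-|[]]]]; auto. Qed.

Definition Der (G : form L -> Prop) a := exists s, (forall x, In x s -> G x) /\ Thm (Imp (bigAnd s) a).
Definition Cons G := ~ Der G Bot.
Definition MCS G := Cons G /\ forall a, G a \/ G (Neg a).

Lemma der_thm G a : Thm a -> Der G a.
Proof. intro H. exists []; split; [simpl; tauto|]. apply (thm_taut [a]); [apply thm_in1; auto|taut_tac]. Qed.

Lemma der_in (G : form L -> Prop) a : G a -> Der G a.
Proof. intro H. exists [a]; split; [intros x [<-|[]]; auto|]. apply KP_taut; taut_tac. Qed.

Lemma bigAnd_app_thm (s1 s2 : list (form L)) :
  Thm (Imp (bigAnd (s1 ++ s2)) (And (bigAnd s1) (bigAnd s2))).
Proof. apply KP_taut. intro v. simpl. rewrite !peval_bigAnd, forallb_app.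
  destruct (forallb (peval v) s1), (forallb (peval v) s2); reflexivity. Qed.

Lemma der_mp G a b : Der G a -> Der G (Imp a b) -> Der G b.
Proof.
  intros [s1 [H1 T1]] [s2 [H2 T2]]. exists (s1 ++ s2); split.
  { intros x Hx; apply in_app_or in Hx; destruct Hx; auto. }
  apply (thm_taut [Imp (bigAnd s1) a; Imp (bigAnd s2) (Imp a b);
                   Imp (bigAnd (s1 ++ s2)) (And (bigAnd s1) (bigAnd s2))]).
  { apply thm_in3; auto using bigAnd_app_thm. }
  taut_tac.
Qed.

Lemma der_taut G xs y : (forall x, In x xs -> Der G x) -> tautology (chain xs y) -> Der G y.
Proof.
  intros H T. assert (D0 : Der G (chain xs y)) by (apply der_thm, KP_taut, T).
  clear T. induction xs as [|x xs IH]; simpl in *; [exact D0|].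
  apply IH; [intros; apply H; auto|]. eapply der_mp; [|exact D0]. apply H; auto.
Qed.

Lemma mcs_der G a : MCS G -> Der G a -> G a.
Proof.
  intros [C Cm] Hd. destruct (Cm a) as [Ha|Hn]; [exact Ha|]. exfalso; apply C.
  eapply der_mp; [exact Hd|]. apply der_in; exact Hn.
Qed.

Lemma mcs_thm G a : MCS G -> Thm a -> G a.
Proof. intros M H; apply mcs_der; auto; apply der_thm; auto. Qed.

Lemma mcs_taut G (M : MCS G) xs y : (forall x, In x xs -> G x) -> tautology (chain xs y) -> G y.
Proof. intros H T; apply mcs_der; auto. apply (der_taut G xs); auto. intros; apply der_in; auto. Qed.

Lemma mcs_bot G : MCS G -> ~ G Bot.
Proof. intros [C _] H; apply C, der_in, H. Qed.

Lemma mcs_neg G a : MCS G -> (G (Neg a) <-> ~ G a).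
Proof.
  intros M. split.
  - intros Hn Ha. apply (mcs_bot G M). apply (mcs_taut G ltac:(assumption) [a; Neg a]); [intros x [<-|[<-|[]]]; auto|taut_tac].
  - intros Hn. destruct (proj2 M a); tauto.
Qed.

Lemma mcs_imp G a b : MCS G -> (G (Imp a b) <-> (G a -> G b)).
Proof.
  intros M; split.
  - intros Hi Ha. apply (mcs_taut G ltac:(assumption) [a; Imp a b]); [intros x [<-|[<-|[]]]; auto|taut_tac].
  - intros H. destruct (proj2 M a) as [Ha|Hn].
    + apply (mcs_taut G ltac:(assumption) [b]); [intros x [<-|[]]; auto|taut_tac].
    + apply (mcs_taut G ltac:(assumption) [Neg a]); [intros x [<-|[]]; auto|taut_tac].
Qed.

Lemma mcs_bigAnd G xs : MCS G -> (forall x, In x xs -> G x) -> G (bigAnd xs).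
Proof.
  intros M. induction xs as [|x xs IH]; simpl; intro H.
  - apply mcs_thm; [exact M|]. apply KP_taut; taut_tac.
  - apply (mcs_taut G M [x; bigAnd xs]); [|taut_tac].
    intros y [<-|[<-|[]]]; auto.
Qed.

Lemma mcs_bigOr G xs : MCS G -> G (bigOr xs) -> exists x, In x xs /\ G x.
Proof.
  intros M. induction xs as [|x xs IH]; simpl; intro H.
  - exfalso; eapply mcs_bot; eauto.
  - destruct (proj2 M x) as [Hx|Hn]; [exists x; auto|].
    destruct IH as [y [Hy Gy]]; [|exists y; auto].
    apply (proj1 (mcs_imp G _ _ M) H Hn).
Qed.

Lemma deduction G a b : Der (fun u => G u \/ u = a) b -> Der G (Imp a b).
Proof.
  intros [s [Hs T]]. revert b T. induction s as [|x s IH]; intros b T.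
  - exists []; split; [simpl; tauto|]. apply (thm_taut [Imp (bigAnd []) b]); [apply thm_in1; auto|taut_tac].
  - assert (T' : Thm (Imp (bigAnd s) (Imp x b))).
    { apply (thm_taut [Imp (bigAnd (x :: s)) b]); [apply thm_in1; auto|taut_tac]. }
    destruct (IH (fun y Hy => Hs y (or_intror Hy)) _ T') as [s' [Hs' T'']].
    destruct (Hs x (or_introl eq_refl)) as [Gx| ->].
    + exists (x :: s'); split; [intros y [<-|Hy]; auto|].
      apply (thm_taut [Imp (bigAnd s') (Imp a (Imp x b))]); [apply thm_in1; auto|taut_tac].
    + exists s'; split; [auto|].
      apply (thm_taut [Imp (bigAnd s') (Imp a (Imp a b))]); [apply thm_in1; auto|taut_tac].
Qed.

Lemma chain_list {T0 : Type} (F : (T0 -> Prop) -> Prop) (xs : list T0) :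
  (exists X, F X) ->
  (forall X Y, F X -> F Y -> (forall t, X t -> Y t) \/ (forall t, Y t -> X t)) ->
  (forall x, In x xs -> exists X, F X /\ X x) ->
  exists X, F X /\ forall x, In x xs -> X x.
Proof.
  intros [X0 F0] Hc. induction xs as [|x xs IH]; intro H.
  - exists X0; split; [auto|intros x []].
  - destruct IH as [X [FX HX]]; [intros; apply H; simpl; auto|].
    destruct (H x (or_introl eq_refl)) as [Y [FY Yx]].
    destruct (Hc X Y FX FY) as [S|S].
    + exists Y; split; [auto|intros y [<-|Hy]; auto].
    + exists X; split; [auto|intros y [<-|Hy]; auto].
Qed.

Lemma lindenbaum G : Cons G -> exists M, MCS M /\ forall x, G x -> M x.
Proof.
  intro C.
  destruct (ZornM.zorn_ext Cons G C) as [M [HGM [CM Mx]]].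
  - intros F NE HF Hc [s [Hs T]].
    destruct (chain_list F s NE Hc Hs) as [X [FX HX]].
    apply (HF X FX). exists s; auto.
  - exists M; split; [split; [exact CM|]|exact HGM].
    intro a. apply NNPP; intro N.
    assert (Na : ~ M a) by tauto. assert (Nn : ~ M (Neg a)) by tauto.
    assert (D1 : Der M (Imp a Bot)).
    { apply deduction. apply NNPP; intro N1. apply Na, Mx. exact N1. }
    assert (D2 : Der M (Imp (Neg a) Bot)).
    { apply deduction. apply NNPP; intro N1. apply Nn, Mx. exact N1. }
    apply CM. apply (der_taut M [Imp a Bot; Imp (Neg a) Bot]); [intros x [<-|[<-|[]]]; auto|taut_tac].
Qed.

Definition CW := { G : form L -> Prop | MCS G }.
Definition CF : frame L := @Frame L CW (fun l G H => forall x, proj1_sig G (Box l x) -> proj1_sig H x).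
Definition CV (p : nat) (G : W CF) : Prop := proj1_sig G (Var p).

Lemma truth : forall a (G : W CF), sat CF CV G a <-> proj1_sig G a.
Proof.
  induction a as [p| |a IHa b IHb|l a IH]; intros [G MG]; simpl.
  - tauto.
  - split; [tauto|]. intro H; apply (mcs_bot G MG H).
  - rewrite (mcs_imp G a b MG). specialize (IHa (exist _ G MG)); specialize (IHb (exist _ G MG)).
    simpl in *. tauto.
  - split.
    + intro H. apply NNPP; intro N.
      assert (C : Cons (fun u => G (Box l u) \/ u = Neg a)).
      { intro Dd. apply deduction in Dd. destruct Dd as [s [Hs Ts]].
        apply N. apply (mcs_taut G ltac:(assumption) [bigAnd (map (Box l) s); Imp (bigAnd (map (Box l) s)) (Box l a)]).
        - intros x [<-|[<-|[]]].
          + apply mcs_bigAnd; [exact MG|]. intros y Hy. apply in_map_iff in Hy.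
            destruct Hy as [z [<- Hz]]. apply Hs; exact Hz.
          + apply mcs_thm; [exact MG|]. eapply thm_trans; [apply box_bigAnd|]. apply box_mono.
            apply (thm_taut [Imp (bigAnd s) (Imp (Neg a) Bot)]); [apply thm_in1; auto|taut_tac].
        - taut_tac. }
      destruct (lindenbaum _ C) as [M [MM HM]].
      assert (Ma : ~ M a).
      { intro Ma. apply (mcs_bot M MM). apply (mcs_taut M MM [a; Neg a]); [|taut_tac].
        intros x [<-|[<-|[]]]; auto. }
      apply Ma. apply (IH (exist _ M MM)). apply H. simpl. intros x Hx; apply HM; auto.
    + intros H [M MM] R. apply IH. simpl in *. auto.
Qed.
End Basics.

Section Sem.
Context {L : Type} (F : frame L) (V : nat -> W F -> Prop).

Lemma sat_And w a b : sat F V w (And a b) <-> sat F V w a /\ sat F V w b.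
Proof. simpl. split; [|tauto]. intro H. split; apply NNPP; tauto. Qed.

Lemma sat_bigAnd w s : sat F V w (bigAnd s) <-> forall x, In x s -> sat F V w x.
Proof.
  induction s as [|x s IH]; simpl bigAnd.
  - simpl. split; [tauto|]. intros _ H; exact H.
  - rewrite sat_And, IH. simpl. split; [intros [H1 H2] y [<-|Hy]; auto|intro H; split; auto].
Qed.

Lemma sat_bigOr w s : sat F V w (bigOr s) <-> exists x, In x s /\ sat F V w x.
Proof.
  induction s as [|x s IH]; simpl.
  - split; [tauto|]. intros [_ [[] _]].
  - split.
    + intro H. destruct (classic (sat F V w x)) as [Hx|Hx]; [exists x; auto|].
      destruct (proj1 IH (H Hx)) as [y [Hy Sy]]. exists y; auto.
    + intros [y [[<-|Hy] Sy]] Hn; [tauto|]. apply IH; eauto.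
Qed.

Lemma sat_Dia w l a v : R F l w v -> sat F V v a -> sat F V w (Dia l a).
Proof. simpl. intros Hr Ha H. exact (H v Hr Ha). Qed.

Lemma taut_valid w a : tautology a -> sat F V w a.
Proof.
  intro T.
  set (v := fun x => if excluded_middle_informative (sat F V w x) then true else false).
  assert (E : forall x, peval v x = true <-> sat F V w x).
  { induction x as [p| |a1 IH1 a2 IH2|l a1 IH]; simpl.
    - unfold v; destruct (excluded_middle_informative _); split; congruence || tauto.
    - split; [discriminate|tauto].
    - rewrite <- IH1, <- IH2. destruct (peval v a1), (peval v a2); simpl; intuition congruence.
    - unfold v; destruct (excluded_middle_informative _); split; congruence || tauto. }
  apply E, T.
Qed.
End Sem.

Lemma sat_subst {L} (F : frame L) V s a w :
  sat F V w (subst s a) <-> sat F (fun p u => sat F V u (s p)) w a.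
Proof.
  revert w. induction a as [p| |a1 IH1 a2 IH2|l a1 IH]; intro w; simpl; try tauto.
  - rewrite IH1, IH2; tauto.
  - split; intros H v Hv; apply IH; auto.
Qed.

Lemma in_fm {L} (E : list (nat*L*nat)) (g : L -> nat -> form L) i x :
  In x (flat_map (fun '(y,l,k) => if Nat.eqb y i then [g l k] else []) E) <->
  exists l k, In (i,l,k) E /\ x = g l k.
Proof.
  rewrite in_flat_map. split.
  - intros [[[y l] k] [He Hx]]. destruct (Nat.eqb y i) eqn:Ey; [|destruct Hx].
    apply Nat.eqb_eq in Ey; subst. destruct Hx as [<-|[]]. exists l, k; auto.
  - intros [l [k [He ->]]]. exists (i,l,k); split; [auto|]. rewrite Nat.eqb_refl; left; auto.
Qed.

Lemma In_words {A} (s : list A) ws : (forall x, In x ws -> In x s) -> In ws (words (length ws) s).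
Proof.
  induction ws as [|a ws IH]; simpl; intro H; [auto|].
  apply in_flat_map. exists a; split; [auto|]. apply in_map, IH; auto.
Qed.

Lemma words_inv {A} (s : list A) N ws : In ws (words N s) -> length ws = N /\ forall x, In x ws -> In x s.
Proof.
  revert ws; induction N as [|N IH]; simpl; intros ws H.
  - destruct H as [<-|[]]. simpl; split; [auto|intros x []].
  - apply in_flat_map in H. destruct H as [a [Ha H]]. apply in_map_iff in H.
    destruct H as [ws' [<- H]]. destruct (IH _ H) as [E1 E2]. simpl; split; [auto|].
    intros x [<-|Hx]; auto.
Qed.

Lemma choose_word {A} (s : list A) (dflt : A) N (P : nat -> A -> Prop) :
  (forall i, i < N -> exists x, In x s /\ P i x) ->
  exists ws, In ws (words N s) /\ forall i, i < N -> P i (nth i ws dflt).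
Proof.
  revert P; induction N as [|N IH]; intros P H.
  - exists []; simpl; split; [auto|intros; lia].
  - destruct (IH (fun i => P (S i))) as [ws [Hw Hp]]; [intros i Hi; apply H; lia|].
    destruct (H 0 ltac:(lia)) as [x [Hx Px]].
    exists (x :: ws); split.
    + simpl. apply in_flat_map. exists x; split; auto. apply in_map; auto.
    + intros [|i] Hi; simpl; auto. apply Hp; lia.
Qed.

Lemma dpath_sat {L} (F : frame L) V (f : nat -> W F) E x p y a :
  dpath E x p y -> (forall i l k, In (i,l,k) E -> R F l (f i) (f k)) ->
  sat F V (f x) (boxes (map fst p) a) -> sat F V (f y) a.
Proof.
  intros H Hf. induction H as [x|x l y p z He Hp IH]; simpl; [auto|].
  intro Hb. apply IH. apply Hb. apply Hf; exact He.
Qed.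

Lemma dpath_labels {L} (D : diagram L) E x p y :
  dpath E x p y -> (forall e, In e E -> In e (dedges D)) ->
  forall l, In l (map fst p) -> In l (indices D).
Proof.
  intros H HE. induction H as [x|x l y p z He Hp IH]; simpl; [tauto|].
  intros l' [<-|Hl]; auto. unfold indices. apply in_map_iff. exists (x,l,y); split; auto.
Qed.

Section Sound.
Context {L : Type} (D : diagram L) (T : list (nat * L * nat)) (d : nat)
  (HwfD : wf_diagram D) (HT : spanning_tree D T) (Hd : tree_depth D T d).

Lemma eta_sound (F : frame L) V (f : nat -> W F) (kap : nat -> form L) :
  (forall i l k, In (i,l,k) (dedges D) -> R F l (f i) (f k)) ->
  (forall i, i <= dsize D -> sat F V (f i) (kap i)) ->
  forall fuel i, i <= dsize D -> sat F V (f i) (eta_aux D T kap fuel i).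
Proof.
  intros Hf Hk.
  assert (Hchi : forall i, i <= dsize D -> sat F V (f i) (chi D kap i)).
  { intros i Hi. unfold chi. apply sat_And; split; [auto|].
    apply sat_bigAnd. intros x Hx.
    apply (in_fm (dedges D) (fun l k => Dia l (kap k))) in Hx.
    destruct Hx as [l [k [He ->]]]. apply sat_Dia with (f k); [auto|].
    apply Hk. apply (HwfD _ _ _ He). }
  induction fuel as [|fuel IH]; intros i Hi; simpl eta_aux; [auto|].
  apply sat_And; split; [auto|]. apply sat_bigAnd. intros x Hx.
  apply (in_fm T (fun l k => Dia l (eta_aux D T kap fuel k))) in Hx.
  destruct Hx as [l [k [He ->]]]. destruct HT as [HTs _].
  apply sat_Dia with (f k); [auto|]. apply IH. apply (HwfD _ _ _ (HTs _ He)).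
Qed.

Lemma gamma_sound F m : frame_cond D F -> valid F (gamma_m D T d m).
Proof.
  intros Hc V w Hbox. destruct (Hc w) as [f [f0 Hf]].
  destruct HT as [HTs [HT0 HTu]].
  assert (Good : forall i, i < S (dsize D) -> exists x, In x (ps m) /\ sat F V (f i) x).
  { intros i Hi. apply sat_bigOr.
    assert (Hp : exists p, dpath T 0 p i).
    { destruct i as [|i]; [exists []; constructor|]. destruct (HTu (S i)) as [p [Hp _]]; [lia|eauto]. }
    destruct Hp as [p Hp]. apply (dpath_sat F V f T 0 p i); [exact Hp|intros; apply Hf; auto|].
    rewrite f0. unfold box_upto in Hbox. rewrite sat_bigAnd in Hbox. apply Hbox.
    apply in_flat_map. exists (length p). split.
    - apply in_seq. assert (length p <= d) by (apply (proj1 Hd i); [lia|auto]). lia.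
    - apply in_map_iff. exists (map fst p). split; [auto|].
      rewrite <- (length_map fst p) at 1. apply In_words.
      apply (dpath_labels D T 0 p i Hp HTs). }
  destruct (choose_word (ps m) Bot (S (dsize D)) (fun i x => sat F V (f i) x) Good) as [ws [Hws Hs]].
  unfold gammaPsi. apply sat_bigOr. exists (eta D T (fun i => nth i ws Bot)). split.
  - apply in_map_iff. exists ws; auto.
  - unfold eta. rewrite <- f0. apply eta_sound; [exact Hf| |lia].
    intros i Hi. apply Hs. lia.
Qed.

Lemma soundness a : KPlus (fun b => exists m, b = gamma_m D T d m) a -> Log (frame_cond D) a.
Proof.
  intros H F Hc. induction H as [a Ht|l a b|a [m ->]|a b _ IH1 _ IH2|l a _ IH|s a _ IH]; intros V w.
  - apply taut_valid; exact Ht.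
  - simpl. intros H1 H2 v Hv. apply H1; auto.
  - apply gamma_sound; auto.
  - apply (IH1 V w (IH2 V w)).
  - simpl. intros; apply IH.
  - apply sat_subst. apply IH.
Qed.
End Sound.

Lemma path_app {L} (E : list (nat*L*nat)) x p1 y p2 z :
  dpath E x p1 y -> dpath E y p2 z -> dpath E x (p1 ++ p2) z.
Proof. intro H; induction H; simpl; auto. intro; econstructor; eauto. Qed.

Lemma path_split {L} (E : list (nat*L*nat)) x p1 p2 z :
  dpath E x (p1 ++ p2) z -> exists y, dpath E x p1 y /\ dpath E y p2 z.
Proof.
  revert x; induction p1 as [|[l y] p1 IH]; simpl; intros x H.
  - exists x; split; [constructor|auto].
  - inversion H; subst. destruct (IH _ H6) as [w [H1 H2]]. exists w; split; [econstructor; eauto|auto].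
Qed.

Lemma path_targets {L} (E : list (nat*L*nat)) x p z :
  dpath E x p z -> forall v, In v (map snd p) -> exists u l, In (u,l,v) E.
Proof.
  intro H; induction H as [x|x l y p z He Hp IH]; simpl; [tauto|].
  intros v [<-|Hv]; eauto.
Qed.

Lemma path_last {L} (E : list (nat*L*nat)) x p z :
  dpath E x p z -> p <> [] -> In z (map snd p).
Proof.
  intro H; induction H as [x|x l y p z He Hp IH]; simpl; [tauto|].
  intros _. destruct p as [|e p]; [inversion Hp; subst; auto|]. right; apply IH; discriminate.
Qed.

Section Short.
Context {L : Type} (D : diagram L) (T : list (nat * L * nat))
  (HwfD : wf_diagram D) (HT : spanning_tree D T).

Lemma short_path i : 1 <= i <= dsize D -> exists p, dpath T 0 p i /\ length p <= dsize D.
Proof.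
  intros Hi. destruct HT as [HTs [HT0 HTu]].
  destruct (HTu i Hi) as [p [Hp Hu]]. exists p; split; [auto|].
  assert (ND : NoDup (map snd p)).
  { apply NNPP; intro N. apply not_NoDup in N; [|intros a b; destruct (Nat.eq_dec a b); [left|right]; auto].
    destruct N as [v [l1 [l2 [l3 E]]]].
    apply map_eq_app in E. destruct E as [q1 [r [-> [E1 E2]]]].
    apply map_eq_cons in E2. destruct E2 as [e1 [r' [-> [E3 E4]]]].
    apply map_eq_app in E4. destruct E4 as [q2 [r'' [-> [E5 E6]]]].
    apply map_eq_cons in E6. destruct E6 as [e2 [q3 [-> [E7 E8]]]].
    destruct (path_split _ _ _ _ _ Hp) as [y1 [P1 P2]].
    inversion P2; subst.
    destruct (path_split _ _ _ _ _ H4) as [y2 [P3 P4]].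
    destruct e2 as [l' y']. simpl in E7; subst y'.
    inversion P4; subst.
    assert (Hnew : dpath T 0 (q1 ++ (l, y) :: q3) i).
    { apply path_app with y1; [auto|]. econstructor; [exact H2|]. assumption. }
    pose proof (f_equal (@length _) (Hu _ Hnew)) as HL.
    rewrite !length_app in HL. simpl in HL. rewrite length_app in HL. simpl in HL. lia. }
  assert (Inc : incl (map snd p) (seq 1 (dsize D))).
  { intros v Hv. destruct (path_targets T 0 p i Hp v Hv) as [u [l Hul]].
    apply in_seq. destruct (HwfD _ _ _ (HTs _ Hul)) as [_ Hv'].
    destruct v as [|v]; [exfalso; apply (HT0 u l); auto|]. lia. }
  pose proof (NoDup_incl_length ND Inc) as HL. rewrite length_map, length_seq in HL. exact HL.
Qed.
End Short.

Section Compl.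
Context {L : Type} (D : diagram L) (T : list (nat * L * nat)) (d : nat)
  (HwfD : wf_diagram D) (HT : spanning_tree D T) (Hd : tree_depth D T d).

Definition Sig : form L -> Prop := fun b => exists m, b = gamma_m D T d m.
Notation Thm := (KPlus Sig).
Notation n := (dsize D).

Lemma subst_And s (a b : form L) : subst s (And a b) = And (subst s a) (subst s b).
Proof. reflexivity. Qed.
Lemma subst_bigAnd s (xs : list (form L)) : subst s (bigAnd xs) = bigAnd (map (subst s) xs).
Proof. induction xs; simpl; [reflexivity|]. rewrite <- IHxs. reflexivity. Qed.
Lemma subst_bigOr s (xs : list (form L)) : subst s (bigOr xs) = bigOr (map (subst s) xs).
Proof. induction xs; simpl; [reflexivity|]. rewrite <- IHxs. reflexivity. Qed.
Lemma subst_boxes s ls (a : form L) : subst s (boxes ls a) = boxes ls (subst s a).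
Proof. induction ls; simpl; [reflexivity|]. rewrite IHls. reflexivity. Qed.

Lemma subst_chi s j i : subst s (chi D j i) = chi D (fun k => subst s (j k)) i.
Proof.
  unfold chi. rewrite subst_And. f_equal. rewrite subst_bigAnd. f_equal.
  induction (dedges D) as [|[[y l] k] E IH]; simpl; [auto|]. rewrite map_app, IH.
  destruct (Nat.eqb y i); reflexivity.
Qed.

Lemma subst_eta_aux s j fuel i :
  subst s (eta_aux D T j fuel i) = eta_aux D T (fun k => subst s (j k)) fuel i.
Proof.
  revert i; induction fuel as [|fuel IHf]; intro i; [apply subst_chi|].
  simpl eta_aux. rewrite subst_And, subst_chi. f_equal. rewrite subst_bigAnd. f_equal.
  assert (H : forall E : list (nat*L*nat),
    map (subst s) (flat_map (fun '(y,l,k) => if Nat.eqb y i then [Dia l (eta_aux D T j fuel k)] else []) E)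
    = flat_map (fun '(y,l,k) => if Nat.eqb y i then [Dia l (eta_aux D T (fun k => subst s (j k)) fuel k)] else []) E).
  { induction E as [|[[y l] k] E IH]; simpl; [auto|]. rewrite map_app, IH.
    destruct (Nat.eqb y i); simpl; rewrite ?IHf; reflexivity. }
  apply H.
Qed.

Lemma subst_eta s j : subst s (eta D T j) = eta D T (fun k => subst s (j k)).
Proof. apply subst_eta_aux. Qed.

Lemma thm_bigAnd xs : (forall x, In x xs -> Thm x) -> Thm (bigAnd xs).
Proof.
  induction xs as [|x xs IH]; intro H; simpl.
  - apply KP_taut; taut_tac.
  - apply (thm_taut Sig [x; bigAnd xs]); [|taut_tac].
    intros y [<-|[<-|[]]]; [apply H; simpl; auto|apply IH; intros; apply H; simpl; auto].
Qed.

Lemma thm_imp_bigAnd y xs : (forall x, In x xs -> Thm (Imp y x)) -> Thm (Imp y (bigAnd xs)).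
Proof.
  induction xs as [|x xs IH]; intro H; simpl.
  - apply KP_taut; taut_tac.
  - apply (thm_taut Sig [Imp y x; Imp y (bigAnd xs)]); [|taut_tac].
    intros z [<-|[<-|[]]]; [apply H; simpl; auto|apply IH; intros; apply H; simpl; auto].
Qed.

Lemma thm_bigAnd_elem x xs : In x xs -> Thm (Imp (bigAnd xs) x).
Proof.
  intro Hx. apply KP_taut. intro v. simpl. rewrite peval_bigAnd.
  destruct (forallb (peval v) xs) eqn:E; [|reflexivity].
  rewrite forallb_forall in E. rewrite (E x Hx). reflexivity.
Qed.

Lemma thm_boxes ls a : Thm a -> Thm (boxes ls a).
Proof. induction ls; simpl; auto. intro; apply KP_Nec; auto. Qed.

Lemma thm_box_upto s Y : Thm (subst s Y) -> Thm (subst s (box_upto D d Y)).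
Proof.
  intro H. unfold box_upto. rewrite subst_bigAnd. apply thm_bigAnd. intros x Hx.
  apply in_map_iff in Hx. destruct Hx as [z [<- Hz]]. apply in_flat_map in Hz.
  destruct Hz as [k [_ Hz]]. apply in_map_iff in Hz. destruct Hz as [ls [<- _]].
  rewrite subst_boxes. apply thm_boxes; auto.
Qed.

Fixpoint atoms (G : list (form L)) : list (form L) :=
  match G with
  | [] => [Top]
  | p :: G' => flat_map (fun x => [And p x; And (Neg p) x]) (atoms G')
  end.

Lemma atoms_cover G : tautology (bigOr (atoms G)).
Proof.
  intro v. rewrite peval_bigOr. apply existsb_exists.
  induction G as [|p G IH]; simpl.
  - exists Top; simpl; auto.
  - destruct IH as [x [Hx Px]].
    destruct (peval v p) eqn:Ep.
    + exists (And p x). split; [apply in_flat_map; exists x; simpl; auto|]. simpl. rewrite Ep, Px. reflexivity.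
    + exists (And (Neg p) x). split; [apply in_flat_map; exists x; simpl; auto|]. simpl. rewrite Ep, Px. reflexivity.
Qed.

Lemma atoms_decide G x p : In x (atoms G) -> In p G ->
  tautology (Imp x p) \/ tautology (Imp x (Neg p)).
Proof.
  revert x. induction G as [|q G IH]; intros x Hx Hp; [destruct Hp|].
  simpl in Hx. apply in_flat_map in Hx. destruct Hx as [y [Hy Hx]].
  destruct Hp as [<-|Hp].
  - destruct Hx as [<-|[<-|[]]]; [left|right]; taut_tac.
  - destruct (IH y Hy Hp) as [Ty|Ty]; [left|right];
    destruct Hx as [<-|[<-|[]]]; intro v; specialize (Ty v); simpl in *;
    destruct (peval v q), (peval v y), (peval v p); simpl in *; congruence.
Qed.

Lemma map_nth_seq1 (A : list (form L)) :
  map (fun p => nth (p - 1) A Bot) (seq 1 (length A)) = A.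
Proof.
  rewrite <- seq_shift, map_map. simpl.
  erewrite map_ext; [|intro x; rewrite Nat.sub_0_r; reflexivity].
  induction A as [|a A IH]; simpl; [auto|]. f_equal.
  rewrite <- seq_shift, map_map. exact IH.
Qed.

Definition decides (x p : form L) := Thm (Imp x p) \/ Thm (Imp x (Neg p)).

Lemma exists_kappa G0 (M0 : MCS Sig G0) (G : list (form L)) :
  exists kap, G0 (eta D T kap) /\ forall i, i <= n -> forall p, In p G -> decides (kap i) p.
Proof.
  set (A := atoms G). set (m := length A). set (s := fun p => nth (p - 1) A Bot).
  assert (Hps : map (subst s) (ps m) = A).
  { unfold ps. rewrite map_map. simpl. apply map_nth_seq1. }
  assert (Hg : Thm (subst s (gamma_m D T d m))) by (apply KP_US, KP_ax; exists m; auto).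
  unfold gamma_m in Hg. simpl in Hg.
  assert (Hb : Thm (subst s (box_upto D d (bigOr (ps m))))).
  { apply thm_box_upto. rewrite subst_bigOr, Hps. apply KP_taut, atoms_cover. }
  pose proof (mcs_thm Sig G0 _ M0 (thm_mp Sig _ _ Hg Hb)) as HG.
  unfold gammaPsi in HG. rewrite subst_bigOr, map_map in HG.
  destruct (mcs_bigOr Sig G0 _ M0 HG) as [x [Hx Gx]].
  apply in_map_iff in Hx. destruct Hx as [w [<- Hw]].
  rewrite subst_eta in Gx. exists (fun k => subst s (nth k w Bot)). split; [exact Gx|].
  intros i Hi p Hp. destruct (words_inv _ _ _ Hw) as [Lw Ew].
  assert (Hin : In (nth i w Bot) (ps m)) by (apply Ew, nth_In; lia).
  unfold ps in Hin. apply in_map_iff in Hin. destruct Hin as [q [Eq Hq]].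
  rewrite <- Eq. simpl. apply in_seq in Hq.
  assert (HA : In (s q) A) by (unfold s; apply nth_In; unfold m in Hq; lia).
  destruct (atoms_decide G (s q) p HA Hp) as [H|H]; [left|right]; apply KP_taut; exact H.
Qed.

Lemma dia_bot l th : Thm (Imp th Bot) -> Thm (Imp (Dia l th) Bot).
Proof.
  intro H. apply (thm_taut Sig [Box l (Neg th)]); [|taut_tac].
  intros y [<-|[]]. apply KP_Nec. exact H.
Qed.

Lemma chi_bot_aux kap i : Thm (Imp (chi D kap i) Bot) ->
  forall p fuel x, dpath T x p i -> length p <= fuel -> Thm (Imp (eta_aux D T kap fuel x) Bot).
Proof.
  intros Hc p. induction p as [|[l y] p IH]; intros fuel x Hp Hl.
  - inversion Hp; subst. destruct fuel; simpl; [exact Hc|].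
    apply (thm_taut Sig [Imp (chi D kap i) Bot]); [|taut_tac]. intros z [<-|[]]; auto.
  - inversion Hp; subst. destruct fuel as [|fuel]; [simpl in Hl; lia|].
    simpl in Hl. pose proof (IH fuel y H5 ltac:(lia)) as Hy.
    simpl eta_aux.
    set (xs := flat_map (fun '(y0, l0, k) => if Nat.eqb y0 x then [Dia l0 (eta_aux D T kap fuel k)] else []) T).
    assert (Hin : In (Dia l (eta_aux D T kap fuel y)) xs).
    { apply (in_fm T (fun l k => Dia l (eta_aux D T kap fuel k))). exists l, y; auto. }
    apply (thm_taut Sig [Imp (bigAnd xs) (Dia l (eta_aux D T kap fuel y));
                         Imp (Dia l (eta_aux D T kap fuel y)) Bot]); [|taut_tac].
    intros z [<-|[<-|[]]]; [apply thm_bigAnd_elem; auto|apply dia_bot; auto].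
Qed.

Lemma chi_bot kap i : i <= n -> Thm (Imp (chi D kap i) Bot) -> Thm (Imp (eta D T kap) Bot).
Proof.
  intros Hi Hc. unfold eta.
  destruct i as [|i].
  - apply (chi_bot_aux kap 0 Hc [] (S n) 0); [constructor|simpl; lia].
  - destruct (short_path D T HwfD HT (S i) ltac:(lia)) as [p [Hp Hl]].
    apply (chi_bot_aux kap (S i) Hc p (S n) 0); [auto|lia].
Qed.

Lemma eta_kap0 kap : Thm (Imp (eta D T kap) (kap 0)).
Proof. apply KP_taut. unfold eta, chi. simpl eta_aux. taut_tac. Qed.

Lemma chi_kap kap i : Thm (Imp (chi D kap i) (kap i)).
Proof. apply KP_taut. unfold chi. taut_tac. Qed.

Lemma chi_dia kap i l k : In (i,l,k) (dedges D) -> Thm (Imp (chi D kap i) (Dia l (kap k))).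
Proof.
  intro He. unfold chi.
  set (xs := flat_map (fun '(x, l0, k0) => if Nat.eqb x i then [Dia l0 (kap k0)] else []) (dedges D)).
  assert (Hin : In (Dia l (kap k)) xs).
  { apply (in_fm (dedges D) (fun l k => Dia l (kap k))). exists l, k; auto. }
  apply (thm_taut Sig [Imp (bigAnd xs) (Dia l (kap k))]); [|taut_tac].
  intros z [<-|[]]. apply thm_bigAnd_elem; auto.
Qed.

Lemma chain_list2 {T0 : Type} (F : (T0 -> Prop) -> Prop) (xs : list T0) :
  (exists X, F X) ->
  (forall X Y, F X -> F Y -> (forall t, X t -> Y t) \/ (forall t, Y t -> X t)) ->
  exists X, F X /\ forall x, In x xs -> (exists Y, F Y /\ Y x) -> X x.
Proof.
  intros [X0 F0] Hc. induction xs as [|x xs IH].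
  - exists X0; split; [auto|intros x []].
  - destruct IH as [X [FX HX]].
    destruct (classic (exists Y, F Y /\ Y x)) as [[Y [FY Yx]]|N].
    + destruct (Hc X Y FX FY) as [S|S].
      * exists Y; split; [auto|]. intros y [<-|Hy] Hy'; auto.
      * exists X; split; [auto|]. intros y [<-|Hy] Hy'; auto.
    + exists X; split; [auto|]. intros y [<-|Hy] Hy'; [tauto|auto].
Qed.

Lemma exist_ext (P : (form L -> Prop) -> Prop) x y (px : P x) (py : P y) :
  (forall a, x a <-> y a) -> exist P x px = exist P y py.
Proof.
  intro H. assert (x = y) by (apply functional_extensionality; intro a; apply propositional_extensionality; auto).
  subst. f_equal. apply proof_irrelevance.
Qed.

Lemma canon_cond : frame_cond D (CF Sig).
Proof.
  intros [G0 M0].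
  set (Good := fun (A : nat * form L -> Prop) => forall G : list (form L), exists kap,
          G0 (eta D T kap) /\ forall i, i <= n -> forall p, In p G ->
            decides (kap i) p /\ (A (i, p) -> Thm (Imp (kap i) p))).
  set (A0 := fun q : nat * form L => fst q = 0 /\ G0 (snd q)).
  assert (Good0 : Good A0).
  { intro G. destruct (exists_kappa G0 M0 G) as [kap [Hk Hd']]. exists kap; split; [auto|].
    intros i Hi p Hp. split; [auto|]. intros [Hi0 Gp]; simpl in Hi0, Gp; subst i.
    destruct (Hd' 0 Hi p Hp) as [H|H]; [exact H|exfalso].
    pose proof (proj1 (mcs_imp Sig G0 _ _ M0) (mcs_thm Sig G0 _ M0 (eta_kap0 kap)) Hk) as G0k.
    pose proof (proj1 (mcs_imp Sig G0 _ _ M0) (mcs_thm Sig G0 _ M0 H) G0k) as G0n.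
    apply (proj1 (mcs_neg Sig G0 p M0) G0n Gp). }
  destruct (ZornM.zorn_ext Good A0 Good0) as [M [HA0 [GM Mmax]]].
  { intros F NE HF Hc G.
    destruct (chain_list2 F (list_prod (seq 0 (S n)) G) NE Hc) as [X [FX HX]].
    destruct (HF X FX G) as [kap [Hk Hkk]]. exists kap; split; [auto|].
    intros i Hi p Hp. destruct (Hkk i Hi p Hp) as [H1 H2]. split; [auto|].
    intro HU. apply H2. apply HX; [|exact HU]. apply in_prod; [apply in_seq; lia|auto]. }
  assert (Mcomp : forall i p, i <= n -> M (i, p) \/ M (i, Neg p)).
  { intros i p Hi. apply NNPP; intro N.
    assert (N1 : ~ Good (fun u => M u \/ u = (i, p))) by (intro H; apply N; left; apply Mmax; auto).
    assert (N2 : ~ Good (fun u => M u \/ u = (i, Neg p))) by (intro H; apply N; right; apply Mmax; auto).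
    apply not_all_ex_not in N1. destruct N1 as [G1 N1].
    apply not_all_ex_not in N2. destruct N2 as [G2 N2].
    destruct (GM (p :: G1 ++ G2)) as [kap [Hk Hkk]].
    destruct (Hkk i Hi p (or_introl eq_refl)) as [[Hp|Hp] _].
    - apply N1. exists kap; split; [auto|]. intros j Hj q Hq.
      destruct (Hkk j Hj q) as [D1 D2]; [right; apply in_or_app; auto|].
      split; [auto|]. intros [Mq|Eq]; [auto|]. inversion Eq; subst; auto.
    - apply N2. exists kap; split; [auto|]. intros j Hj q Hq.
      destruct (Hkk j Hj q) as [D1 D2]; [right; apply in_or_app; auto|].
      split; [auto|]. intros [Mq|Eq]; [auto|]. inversion Eq; subst; auto. }
  assert (Mcons : forall i, i <= n -> Cons Sig (fun p => M (i, p))).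
  { intros i Hi [s [Hs Ts]].
    destruct (GM s) as [kap [Hk Hkk]].
    assert (H1 : Thm (Imp (kap i) (bigAnd s))).
    { apply thm_imp_bigAnd. intros x Hx. apply (Hkk i Hi x Hx); auto. }
    assert (H2 : Thm (Imp (chi D kap i) Bot)).
    { apply (thm_taut Sig [Imp (chi D kap i) (kap i); Imp (kap i) (bigAnd s); Imp (bigAnd s) Bot]); [|taut_tac].
      apply thm_in3; auto using chi_kap. }
    pose proof (chi_bot kap i Hi H2) as H3.
    apply (mcs_bot Sig G0 M0). exact (proj1 (mcs_imp Sig G0 _ _ M0) (mcs_thm Sig G0 _ M0 H3) Hk). }
  assert (Mmcs : forall i, i <= n -> MCS Sig (fun p => M (i, p))).
  { intros i Hi; split; [apply Mcons; auto|intro p; apply Mcomp; auto]. }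
  assert (Rel : forall i l k x, In (i,l,k) (dedges D) -> M (i, Box l x) -> M (k, x)).
  { intros i l k x He Mi. destruct (HwfD _ _ _ He) as [Hi Hk'].
    apply NNPP; intro N. destruct (Mcomp k x Hk') as [Mk|Mk]; [tauto|].
    destruct (GM [Box l x; Neg x]) as [kap [Hk Hkk]].
    assert (T1 : Thm (Imp (kap i) (Box l x))) by (apply (Hkk i Hi); simpl; auto).
    assert (T2 : Thm (Imp (kap k) (Neg x))) by (apply (Hkk k Hk'); simpl; auto).
    assert (T3 : Thm (Imp (Box l x) (Box l (Neg (kap k))))).
    { apply box_mono. apply (thm_taut Sig [Imp (kap k) (Neg x)]); [apply thm_in1; auto|taut_tac]. }
    assert (H2 : Thm (Imp (chi D kap i) Bot)).
    { apply (thm_taut Sig [Imp (chi D kap i) (kap i); Imp (kap i) (Box l x);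
         Imp (Box l x) (Box l (Neg (kap k))); Imp (chi D kap i) (Dia l (kap k))]); [|taut_tac].
      intros z [<-|[<-|[<-|[<-|[]]]]]; auto using chi_kap, chi_dia. }
    pose proof (chi_bot kap i Hi H2) as H3.
    apply (mcs_bot Sig G0 M0). exact (proj1 (mcs_imp Sig G0 _ _ M0) (mcs_thm Sig G0 _ M0 H3) Hk). }
  assert (E0 : forall p, M (0, p) <-> G0 p).
  { intro p; split.
    - intro Mp. apply NNPP; intro N. apply (proj2 (mcs_neg Sig G0 p M0)) in N.
      assert (Mn : M (0, Neg p)) by (apply HA0; split; auto).
      exact (proj1 (mcs_neg Sig (fun q => M (0, q)) p (Mmcs 0 ltac:(lia))) Mn Mp).
    - intro Gp. apply HA0. split; auto. }
  exists (fun j => match le_dec j n with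
           | left H => exist (MCS Sig) (fun p => M (j, p)) (Mmcs j H)
           | right _ => exist (MCS Sig) G0 M0 end).
  split.
  - destruct (le_dec 0 n) as [H|H]; [|lia]. apply exist_ext. exact E0.
  - intros i l k He. destruct (HwfD _ _ _ He) as [Hi Hk].
    destruct (le_dec i n) as [Hi'|Hi']; [|lia]. destruct (le_dec k n) as [Hk'|Hk']; [|lia].
    simpl. intros x Hx. apply (Rel i l k x He Hx).
Qed.
End Compl.


Lemma completeness_gen {L} (Sig : form L -> Prop) (C : frame L -> Prop) :
  C (CF Sig) -> forall a, Log C a -> KPlus Sig a.
Proof.
  intros HC a HL. apply NNPP; intro N.
  assert (Cn : Cons Sig (fun u => False \/ u = Neg a)).
  { intro Dd. apply deduction in Dd. destruct Dd as [s [Hs Ts]].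
    destruct s as [|x s]; [|exact (Hs x (or_introl eq_refl))].
    apply N. apply (thm_taut Sig [Imp (bigAnd []) (Imp (Neg a) Bot)]); [apply thm_in1; auto|taut_tac]. }
  destruct (lindenbaum Sig _ Cn) as [M [MM HM]].
  assert (Ma : M a).
  { apply (proj1 (truth Sig a (exist _ M MM))). apply HL; exact HC. }
  exact (proj1 (mcs_neg Sig M a MM) (HM _ (or_intror eq_refl)) Ma).
Qed.

Theorem mainTheorem2 (L : Type) (D : diagram L) (T : list (nat * L * nat)) (d : nat)
  (HwfD : wf_diagram D) (Hroot : rooted D)
  (HT : spanning_tree D T) (Hd : tree_depth D T d) :
  forall a : form L,
    Log (frame_cond D) a <-> KPlus (fun b => exists m, b = gamma_m D T d m) a.
Proof.
  intro a. split.
  - apply (completeness_gen (Sig D T d)). apply canon_cond; auto.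
  - apply soundness; auto.
Qed.
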